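(* Let $n\ge 1$, let $Z$ be a vector space over $\mathbf{F}_2$, and let $V$ be the $\mathbf{F}_2$-space of all subsets of $I_n=\{1,\dots,n\}$ with addition the symmetric difference $\triangle$ (so the singletons $\{1\},\dots,\{n\}$ form a basis). Then $$Z^2(V,Z)=Z^2_0(V,Z)\oplus B^2(V,Z).$$
   Context: A cocycle is a map $f:V\times V\to Z$ satisfying, for all $v_1,v_2\in V$: $f(0,v_1)=0$, $f(v_1,v_1)=0$, $f(v_1,v_2)=f(v_2,v_1)$ and $f(v_1+v_2,v_2)=f(v_1,v_2)$ (here $0=\emptyset$). $Z^2(V,Z)$ is the $\mathbf{F}_2$-space of all cocycles. $B^2(V,Z)$ is the subspace of maps $\delta(g)(v_1,v_2)=g(v_1+v_2)+g(v_1)+g(v_2)$ where $g:V\to Z$ ranges over functions with $g(0)=0$. $Z^2_0(V,Z)$ is the subspace of cocycles $f$ such that $f(\sigma,\{i\})=0$ for every nonempty $\sigma\subseteq I_n$ and every $i\in I_n$ with $i>\max(\sigma)$. *)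

(* Defs.v *)
From HB Require Import structures.
From mathcomp Require Import all_boot all_order all_algebra.
Set Implicit Arguments. Unset Strict Implicit. Unset Printing Implicit Defensive.
Import GRing.Theory.
Local Open Scope ring_scope.

(* V = subsets of I_n = 'I_n (elements 0..n-1 model 1..n, order preserved),
   with addition the symmetric difference. *)
Definition vadd (n : nat) (A B : {set 'I_n}) : {set 'I_n} :=
  (A :\: B) :|: (B :\: A).

Definition cocycle (Z : zmodType) (n : nat)
    (f : {set 'I_n} -> {set 'I_n} -> Z) : Prop :=
  forall v1 v2 : {set 'I_n},
    [/\ f set0 v1 = 0, f v1 v1 = 0, f v1 v2 = f v2 v1
      & f (vadd v1 v2) v2 = f v1 v2].

Definition delta (Z : zmodType) (n : nat) (g : {set 'I_n} -> Z)
    (v1 v2 : {set 'I_n}) : Z :=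
  g (vadd v1 v2) + g v1 + g v2.

Definition coboundary (Z : zmodType) (n : nat)
    (f : {set 'I_n} -> {set 'I_n} -> Z) : Prop :=
  exists g : {set 'I_n} -> Z, g set0 = 0 /\
    forall v1 v2, f v1 v2 = delta g v1 v2.

Definition cocycle0 (Z : zmodType) (n : nat)
    (f : {set 'I_n} -> {set 'I_n} -> Z) : Prop :=
  cocycle f /\
  forall (s : {set 'I_n}) (i : 'I_n),
    s != set0 -> (\max_(j in s) val j < val i)%N -> f s [set i] = 0.

(* Main.v *)
Require Import Defs.
From HB Require Import structures.
From mathcomp Require Import all_boot all_order all_algebra.
Import GRing.Theory.
Local Open Scope ring_scope.

Lemma F2_11 : (1 + 1 : 'F_2) = 0. Proof. by apply/val_inj. Qed.
Lemma char2 (Z : lmodType 'F_2) (x : Z) : x + x = 0.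
Proof. by rewrite -{1 2}(scale1r x) -scalerDl F2_11 scale0r. Qed.
Lemma oppZ (Z : lmodType 'F_2) (x : Z) : - x = x.
Proof. by apply/eqP; rewrite eq_sym -subr_eq0 opprK char2. Qed.

Section S.
Variable n : nat.
Implicit Types A B : {set 'I_n}.
Lemma vaddC A B : vadd A B = vadd B A. Proof. by rewrite /vadd setUC. Qed.
Lemma vaddK A B : vadd (vadd A B) B = A.
Proof. by apply/setP => x; rewrite !inE; case: (x \in A); case: (x \in B). Qed.
Lemma vadd0 A : vadd set0 A = A.
Proof. by apply/setP => x; rewrite !inE; case: (x \in A). Qed.
Lemma vaddss A : vadd A A = set0.
Proof. by apply/setP => x; rewrite !inE; case: (x \in A). Qed.
End S.

Section M.
Variables (n : nat) (Z : lmodType 'F_2).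

Lemma cob_coc (f : {set 'I_n} -> {set 'I_n} -> Z) : coboundary f -> cocycle f.
Proof.
case=> g [g0 Hf] v1 v2; rewrite !Hf /delta.
split.
- by rewrite vadd0 g0 addr0 char2.
- by rewrite vaddss g0 add0r char2.
- by rewrite vaddC -!addrA (addrC (g v1)).
- by rewrite vaddK (addrC (g v1)).
Qed.

Lemma coc_sub (f b : {set 'I_n} -> {set 'I_n} -> Z) :
  cocycle f -> cocycle b -> cocycle (fun v1 v2 => f v1 v2 - b v1 v2).
Proof.
move=> Hf Hb v1 v2; case: (Hf v1 v2) => [f1 f2 f3 f4]; case: (Hb v1 v2) => [b1 b2 b3 b4].
by split; [rewrite f1 b1 subrr|rewrite f2 b2 subrr|rewrite f3 b3|rewrite f4 b4].
Qed.

Lemma max_lt (s : {set 'I_n}) (i : 'I_n) :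
  (\max_(j in s) val j < val i)%N -> forall j, j \in s -> (val j < val i)%N.
Proof.
move=> H j js; apply: leq_ltn_trans H; exact: (@leq_bigmax_cond _ (fun j => j \in s) (fun j : 'I_n => val j) j js).
Qed.

Lemma vadd_new (s : {set 'I_n}) i : i \notin s -> vadd s [set i] = i |: s.
Proof.
move=> ni; apply/setP => x; rewrite !inE.
by case: (eqVneq x i) => [->|]; rewrite ?(negbTE ni) //=; case: (x \in s).
Qed.

End M.

Section P2.
Variables (n : nat) (Z : lmodType 'F_2).
Variable f : {set 'I_n} -> {set 'I_n} -> Z.
Hypothesis Hf : cocycle f.

Definition gdef (s : {set 'I_n}) : Z :=
  \sum_(i in s) f [set j in s | (val j < val i)%N] [set i].

Lemma gdef_step (s : {set 'I_n}) (i : 'I_n) : i \notin s -> (forall j, j \in s -> (val j < val i)%N) ->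
  gdef (i |: s) = f s [set i] + gdef s.
Proof.
move=> ni lt; rewrite /gdef (big_setU1 _ ni) /=; congr (_ + _).
  congr (f _ _); apply/setP => j; rewrite !inE.
  case: (eqVneq j i) => [->|] /=; first by rewrite ltnn (negbTE ni).
  by move=> _; case js: (j \in s) => //=; rewrite lt.
apply: eq_bigr => k ks; congr (f _ _); apply/setP => j; rewrite !inE.
case: (eqVneq j i) => [->|] //=.
by rewrite (negbTE ni) ltnNge ltnW // lt.
Qed.

Lemma gdef1 (i : 'I_n) : gdef [set i] = 0.
Proof.
rewrite /gdef big_set1.
have -> : [set j in [set i] | (val j < val i)%N] = set0.
  by apply/setP => j; rewrite !inE; case: (eqVneq j i) => [->|] //=; rewrite ltnn.
by case: (Hf [set i] [set i]).
Qed.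

Lemma gdef0 : gdef set0 = 0.
Proof. by rewrite /gdef big_set0. Qed.

End P2.

Section P3.
Variables (n : nat) (Z : lmodType 'F_2).
Variable g : {set 'I_n} -> Z.
Hypothesis g0 : g set0 = 0.
Hypothesis H : forall (s : {set 'I_n}) (i : 'I_n), s != set0 ->
  (forall j, j \in s -> (val j < val i)%N) -> delta g s [set i] = 0.

Definition G (s : {set 'I_n}) : Z := \sum_j (((j \in s) : nat)%:R : 'F_2) *: g [set j].

Lemma G_step (s : {set 'I_n}) i : i \notin s -> G (i |: s) = G s + g [set i].
Proof.
move=> ni; rewrite /G (bigD1 i) //= (bigD1 i (P := predT)) //= setU11 (negbTE ni).
rewrite scale1r scale0r add0r addrC; congr (_ + _); apply: eq_bigr => j ne.
by rewrite in_setU1 (negbTE ne).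
Qed.

Lemma g_lin t : forall s : {set 'I_n}, (forall j, j \in s -> (val j < t)%N) -> g s = G s.
Proof.
elim: t => [|t IH] s lt.
  have -> : s = set0 by apply/setP => j; rewrite inE; apply/negbTE/negP => /lt.
  by rewrite g0 /G big1 // => j _; rewrite inE scale0r.
case: (pickP (fun j => (j \in s) && (val j == t))) => [i /andP[iS /eqP it] | none].
  set s' := s :\ i.
  have ni : i \notin s' by rewrite !inE eqxx.
  have sE : s = i |: s' by rewrite setD1K.
  have lt' : forall j, j \in s' -> (val j < t)%N.
    move=> j; rewrite !inE => /andP[ne js]; have := lt j js.
    rewrite ltnS leq_eqVlt => /orP[/eqP e|//].
    by rewrite -it in e; move/val_inj: e => e; rewrite e eqxx in ne.
  have E : g s = g s' + g [set i].
    case: (eqVneq s' set0) => [e|nz].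
      by rewrite sE e setU0 g0 add0r.
    have h : delta g s' [set i] = 0 by apply: H => // j /lt'; rewrite it.
    rewrite /delta vadd_new // -sE in h.
    by apply/eqP; rewrite -subr_eq0 opprD !oppZ addrA h.
  by rewrite E (IH s' lt') sE G_step.
apply: IH => j js; have := lt j js; rewrite ltnS leq_eqVlt => /orP[/eqP e|//].
by move: (none j); rewrite js e eqxx.
Qed.

Lemma delta0 v1 v2 : delta g v1 v2 = 0.
Proof.
have L s : g s = G s.
  by apply: (@g_lin n); move=> j _; exact: ltn_ord.
rewrite /delta !L /G -!big_split big1 // => j _ /=.
by rewrite /vadd !inE; case: (j \in v1); case: (j \in v2); rewrite /= ?scale1r ?scale0r ?addr0 ?add0r ?char2.
Qed.
End P3.

Lemma lt_max n (s : {set 'I_n}) (i : 'I_n) : s != set0 ->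
  (forall j, j \in s -> (val j < val i)%N) -> (\max_(j in s) val j < val i)%N.
Proof.
move=> /set0Pn [j0 j0s] lt.
have ip : (0 < val i)%N by apply: leq_ltn_trans (lt j0 j0s).
have : (\max_(j in s) val j <= (val i).-1)%N.
  by apply/bigmax_leqP => j js; rewrite -ltnS prednK // lt.
by move/leq_ltn_trans; apply; rewrite prednK.
Qed.

Theorem mainTheorem2 (n : nat) (Z : lmodType 'F_2) : (0 < n)%N ->
  [/\ (forall f : {set 'I_n} -> {set 'I_n} -> Z, coboundary f -> cocycle f),
      (forall f : {set 'I_n} -> {set 'I_n} -> Z, cocycle f ->
         exists f0 b : {set 'I_n} -> {set 'I_n} -> Z,
           [/\ cocycle0 f0, coboundary b & forall v1 v2, f v1 v2 = f0 v1 v2 + b v1 v2])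
    & (forall f : {set 'I_n} -> {set 'I_n} -> Z,
         cocycle0 f -> coboundary f -> forall v1 v2, f v1 v2 = 0)].
Proof.
move=> _; split.
- exact: cob_coc.
- move=> f Hf; pose g := @gdef n Z f.
  have cb : coboundary (delta g) by exists g; split => //; exact: (@gdef0 n Z f).
  exists (fun v1 v2 => f v1 v2 - delta g v1 v2), (delta g); split => //.
  + split; first exact: (@coc_sub n Z f _ Hf (@cob_coc n Z _ cb)).
    move=> s i _ /max_lt lt.
    have ni : i \notin s by apply/negP => /lt; rewrite ltnn.
    rewrite /delta vadd_new // /g (@gdef_step n Z f) // (@gdef1 n Z f) // addr0.
    by rewrite -addrA char2 addr0 subrr.
  + by move=> v1 v2; rewrite subrK.
- move=> f [Hf H0] [g [g0 E]] v1 v2; rewrite E; apply: delta0 => // s i nz lt.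
  by rewrite -E; apply: H0 => //; apply: lt_max.
Qed.
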